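(* Let $F_R(n)$ be the $n\times n$ Fibonacci--Redheffer matrix. Then, as $n\to\infty$, \[ \det(F_R(n))\sim C_0\,\phi^{\frac{n(n+1)}{2}}\,5^{-\frac{n}{2}}, \] where $C_0=C\cdot C_\phi\approx -0.7921376$, with $C=\lim_{n\to\infty}\sum_{k=1}^n\frac{\mu(k)}{F_k}$ and \[ C_\phi=\prod_{k=1}^{\infty}\left(1-b^k\right)\approx 1.226742,\qquad b=-\phi^{-2}. \]
   Context: The Fibonacci numbers are $F_1=F_2=1$, $F_n=F_{n-1}+F_{n-2}$ for $n\ge 3$, and $\phi=\frac{1+\sqrt5}{2}$ is the golden ratio. The Fibonacci--Redheffer matrix $F_R(n)=[F_R(i,j)]_{i,j=1}^n$ is defined by $F_R(i,j)=1$ if $j=1$; $F_R(i,j)=F_i$ if $i\mid j$; and $F_R(i,j)=0$ otherwise. $\mu$ denotes the Möbius function. For sequences, $a_n\sim b_n$ means $\lim_{n\to\infty} b_n/a_n=1$. *)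

(* Defs.v *)
From HB Require Import structures.
From mathcomp Require Import all_boot all_order all_algebra.
From mathcomp Require Import all_classical all_reals all_analysis.
Set Implicit Arguments. Unset Strict Implicit. Unset Printing Implicit Defensive.
Import Order.TTheory GRing.Theory Num.Theory.
Local Open Scope ring_scope.

Fixpoint fib (n : nat) : nat :=
  match n with
  | 0 => 0
  | 1 => 1
  | (m.+1 as k).+1 => fib k + fib m
  end.

Definition squarefree (n : nat) : bool :=
  (0 < n)%N && all (fun p => logn p n <= 1)%N (primes n).
Definition mobius (n : nat) : int :=
  if squarefree n then (-1) ^+ size (primes n) else 0.

(* Fibonacci--Redheffer matrix, with 1-based indices i = i0+1, j = j0+1:
   F_R(i,j) = 1 if j = 1; F_i if i | j; 0 otherwise. *)
Definition fibRedheffer (R : pzRingType) (n : nat) : 'M[R]_n :=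
  \matrix_(i < n, j < n)
    if j.+1 == 1%N then 1
    else if (i.+1 %| j.+1)%N then (fib i.+1)%:R else 0.

Definition golden (R : realType) : R := (1 + Num.sqrt 5) / 2.

(* Main.v *)
Require Import Defs.
From HB Require Import structures.
From mathcomp Require Import all_boot all_order all_algebra.
From mathcomp Require Import all_classical all_reals all_analysis.
From mathcomp Require Import ring lra.
Set Implicit Arguments. Unset Strict Implicit. Unset Printing Implicit Defensive.
Import Order.TTheory GRing.Theory Num.Theory numFieldNormedType.Exports.
Local Open Scope classical_set_scope.
Local Open Scope ring_scope.

Lemma sqf_logn n : (0 < n)%N -> reflect (forall q, logn q n <= 1)%N (squarefree n).
Proof.
move=> n0; rewrite /squarefree n0 /=; apply: (iffP allP) => H q //.
case: (boolP (q \in primes n)) => [/H //|]; rewrite -logn_gt0 -leqNgt.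
by move/leq_trans; apply.
Qed.

Lemma mob_sq p e : prime p -> (p %| e)%N -> mobius (p * e) = 0.
Proof.
move=> pp pe; have [->|e0] := posnP e; first by rewrite muln0.
rewrite /mobius; case: (boolP (squarefree _)) => // /(sqf_logn _) H.
have pe0 : (0 < p * e)%N by rewrite muln_gt0 prime_gt0.
have := H pe0 p.
by rewrite lognM ?(prime_gt0 pp) // logn_prime // eqxx add1n ltnS leqNgt logn_gt0 mem_primes pp e0 pe.
Qed.

Lemma mob_p p e : prime p -> ~~ (p %| e)%N -> mobius (p * e) = - mobius e.
Proof.
move=> pp npe; have [->|e0] := posnP e; first by rewrite muln0 /mobius /= oppr0.
have p0 := prime_gt0 pp.
have lpe : logn p e = 0%N.
  by apply/eqP; rewrite -leqn0 leqNgt logn_gt0 mem_primes pp e0 /=.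
rewrite /mobius; have -> : squarefree (p * e) = squarefree e.
  apply/(sqf_logn _)/(sqf_logn _) => //; first by rewrite muln_gt0 p0.
    move=> H q; apply: leq_trans (H q); rewrite lognM //; exact: leq_addl.
  move=> H q; rewrite lognM // logn_prime //.
  by case: eqP => [->|]; rewrite ?lpe ?H.
have -> : size (primes (p * e)) = (size (primes e)).+1.
  have /perm_size -> // : perm_eq (primes (p * e)) (p :: primes e).
  apply: uniq_perm; first exact: primes_uniq.
    by rewrite /= primes_uniq andbT -logn_gt0 lpe.
  by move=> q; rewrite primesM // primes_prime // in_cons in_nil orbF in_cons.
by case: (squarefree e); rewrite ?oppr0 // exprS mulN1r.
Qed.

Lemma mob_sum m : (0 < m)%N -> \sum_(d <- divisors m) mobius d = (m == 1%N)%:R.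
Proof.
move=> m0; case: (ltngtP m 1) => [|m1|->]; first by rewrite ltnS leqn0 => /eqP Hm; rewrite Hm in m0.
  set p := pdiv m; have pp : prime p by exact: pdiv_prime.
  have p0 := prime_gt0 pp; set m' := (m %/ p)%N.
  have Hm : m = (m' * p)%N by rewrite divnK // pdiv_dvd.
  have m'0 : (0 < m')%N by move: m0; rewrite Hm muln_gt0 => /andP[].
  rewrite (bigID (fun d => p %| d)%N) /=.
  have -> : \sum_(d <- divisors m | (p %| d)%N) mobius d = \sum_(e <- divisors m') mobius (p * e).
    rewrite -big_filter (perm_big [seq (p * e)%N | e <- divisors m']) ?big_map //.
    apply: uniq_perm; first by rewrite filter_uniq // divisors_uniq.
      by rewrite map_inj_uniq ?divisors_uniq // => x y /eqP; rewrite eqn_pmul2l // => /eqP.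
    move=> d; rewrite mem_filter; apply/andP/mapP => [[pd]|[e]].
      rewrite -dvdn_divisors // => dm; exists (d %/ p)%N; last by rewrite mulnC divnK.
      rewrite -dvdn_divisors // -(dvdn_pmul2l p0) [X in (X %| _)%N]mulnC divnK //.
      by rewrite mulnC -Hm.
    rewrite -dvdn_divisors // => em ->; split; first exact: dvdn_mulr.
    by rewrite -dvdn_divisors // Hm (mulnC m') dvdn_pmul2l.
  rewrite (bigID (fun d => p %| d)%N) /= big1 ?add0r; last first.
    by move=> e pe; rewrite mob_sq.

  rewrite (eq_bigr (fun e => - mobius e)); last first.
    by move=> e pe; rewrite mob_p.
  have -> : \sum_(d <- divisors m | ~~ (p %| d)%N) mobius d = \sum_(d <- divisors m' | ~~ (p %| d)%N) mobius d.
    rewrite -big_filter -[RHS]big_filter; apply: perm_big.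
    apply: uniq_perm; rewrite ?filter_uniq ?divisors_uniq // => d.
    rewrite !mem_filter; case: (boolP (p %| d)%N) => //= npd.
    rewrite -!dvdn_divisors // Hm Gauss_dvdl // coprime_sym prime_coprime //.
  by rewrite sumrN addNr.
have -> : divisors 1 = [:: 1%N] by [].
rewrite big_seq1 /mobius.
have -> : squarefree 1 = true by [].
by have -> : primes 1 = [::] by [].
Qed.
Lemma mob_sum_range N m : (0 < m)%N -> (m <= N)%N ->
  \sum_(k < N) (if (k.+1 %| m)%N then mobius k.+1 else 0) = (m == 1%N)%:R.
Proof.
move=> m0 mN.
rewrite -big_mkcond /= -(big_mkord (fun k => k.+1 %| m)%N (fun k => mobius k.+1)).
rewrite -(big_add1 _ _ 0 N.+1 (fun k => k %| m)%N) -mob_sum // -big_filter.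
apply: perm_big; apply: uniq_perm; rewrite ?filter_uniq ?divisors_uniq ?iota_uniq //.
move=> d; rewrite mem_filter mem_index_iota -dvdn_divisors //.
case dm: (d %| m)%N => //=.
have d0 : (0 < d)%N by apply: dvdn_gt0 dm.
by rewrite d0 ltnS (leq_trans (dvdn_leq m0 dm) mN).
Qed.

Lemma fib_gt0 k : (0 < fib k.+1)%N.
Proof. elim: k => // -[|k] IH //=; exact: ltn_addr. Qed.

Lemma det_fibR (R : numFieldType) n :
  \det (fibRedheffer R n.+1) =
  (\prod_(i < n.+1) (fib i.+1)%:R) * \sum_(i < n.+1) (mobius i.+1)%:~R / (fib i.+1)%:R.
Proof.
set A := fibRedheffer R n.+1.
pose x (j : 'I_n.+1) : R := (mobius j.+1)%:~R / (fib j.+1)%:R.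
pose L : 'M[R]_n.+1 := \matrix_(i, j) if i == ord0 then x j else (i == j)%:R.
have FN0 k : (fib k.+1)%:R != 0 :> R by rewrite pnatr_eq0 -lt0n fib_gt0.
have detL : \det L = 1.
  rewrite -det_tr det_trig; last first.
    apply/is_trig_mxP => i j lij; rewrite !mxE.
    have -> : (j == ord0) = false.
      by apply/negbTE; apply: contraTneq lij => ->; rewrite ltn0.
    by case: eqP lij => // ->; rewrite ltnn.
  have mob1 : mobius 1 = 1 by [].
  rewrite big_ord_recl !mxE eqxx /x /= mob1 divr1 mul1r.
  by rewrite big1 // => i _; rewrite !mxE eq_sym (negbTE (neq_lift ord0 i)) eqxx.
set B := L *m A.
have detB : \det B = \det A by rewrite det_mulmx detL mul1r.
rewrite -detB (expand_det_row B ord0) [in LHS]big_ord_recl [X in _ + X = _]big1 ?addr0; last first.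
  move=> j _; apply/eqP; rewrite mulf_eq0; apply/orP; left; apply/eqP.
  rewrite !mxE.
  have -> : \sum_(k < n.+1) L ord0 k * A k (lift ord0 j) =
            ((\sum_(k < n.+1) (if (k.+1 %| j.+2)%N then mobius k.+1 else 0)) %:~R).
    rewrite rmorph_sum; apply: eq_bigr => k _; rewrite !mxE eqxx /x lift0.
    have -> : (j.+2 == 1%N) = false by [].
    by case: ifP => _; rewrite ?mulr0 ?rmorph0 // mulfVK.
  by rewrite mob_sum_range // ltnS.
have B00 : B ord0 ord0 = \sum_(i < n.+1) x i.
  rewrite !mxE; apply: eq_bigr => k _; rewrite !mxE eqxx.
  by have -> : (1 == 1)%N = true by []; rewrite mulr1.
have Bl i j : \sum_k L (lift ord0 i) k * A k j = A (lift ord0 i) j.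
  rewrite (bigD1 (lift ord0 i)) //= !mxE eqxx eq_sym (negbTE (neq_lift ord0 i)).
  rewrite mul1r big1 ?addr0 // => k /negbTE kn; rewrite !mxE eq_sym (negbTE (neq_lift ord0 i)).
  by rewrite eq_sym kn mul0r.
rewrite B00 /cofactor addn0 expr0 mul1r mulrC; congr (_ * _).
rewrite -det_tr det_trig; last first.
  apply/is_trig_mxP => i j lij; rewrite !mxE Bl !mxE !lift0.
  have -> : (i.+2 == 1)%N = false by [].
  case: ifP => // /(dvdn_leq (ltn0Sn _)); rewrite !ltnS leqNgt.
  by rewrite lij.
rewrite [RHS]big_ord_recl /= mul1r; apply: eq_bigr => i _.
rewrite !mxE Bl !mxE !lift0.
have -> : (i.+2 == 1)%N = false by [].
by rewrite dvdnn.
Qed.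
Unset Implicit Arguments.
Lemma cvg_geom_diff (R : realType) (u : R^nat) (M r : R) : 0 <= M -> 0 <= r < 1 ->
  (forall n, `|u n.+1 - u n| <= M * r ^+ n) -> cvgn u.
Proof.
move=> M0 /andP[r0 r1] H.
have -> : u = (fun n => u 0%N + series (telescope u) n).
  by apply/funext => n; exact: eq_sum_telescope.
apply: is_cvgD; first exact: is_cvg_cst.
apply: normed_cvg; apply: (@series_le_cvg _ _ (geometric M r)).
- by move=> n; exact: normr_ge0.
- by move=> n; rewrite /geometric /=; exact: mulr_ge0 (exprn_ge0 _ r0).
- by move=> n; exact: H.
- by apply: is_cvg_geometric_series; rewrite ger0_norm.
Qed.
Section Golden.
Variable R : realType.
Let s : R := Num.sqrt 5.
Let phi := golden R.

Lemma s_sq : s ^+ 2 = 5. Proof. by rewrite sqr_sqrtr. Qed.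
Lemma s_ge : 11/5 <= s.
Proof.
have s0 : 0 <= s by exact: sqrtr_ge0.
have := s_sq; rewrite expr2 => h; nra.
Qed.
Lemma phiE : phi = (1 + s) / 2. Proof. by []. Qed.
Lemma phi_sq : phi ^+ 2 = phi + 1.
Proof. rewrite phiE; have := s_sq; rewrite !expr2 => h; nra. Qed.
Lemma phi_ge : 8/5 <= phi.
Proof. rewrite phiE; have := s_ge; lra. Qed.
Lemma phi_gt0 : 0 < phi.
Proof. have := phi_ge; lra. Qed.

Definition bq : R := (golden R)^-2.
Lemma bq_ge0 : 0 <= bq.
Proof. by rewrite /bq invr_ge0 exprn_ge0 // ltW // phi_gt0. Qed.
Lemma bq_le : bq <= 2/5.
Proof.
rewrite /bq -/phi phi_sq.
have h := phi_ge.
rewrite -(@ler_pM2r _ (phi + 1)); last lra.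
rewrite mulVf; last by apply/eqP; lra.
lra.
Qed.

Lemma binet k : (fib k)%:R = phi ^+ k / s * (1 - (- bq) ^+ k).
Proof.
have s0 : s != 0 by apply/eqP; have := s_ge; lra.
have p0 : phi != 0 by apply/eqP; have := phi_gt0; lra.
set psi := 1 - phi.
have hb : - bq * phi = psi.
  have e : (phi + 1)^-1 = 2 - phi.
    by apply: mulr1_eq; have := phi_sq; rewrite expr2 => h; nra.
  rewrite /bq -/phi phi_sq e /psi; have := phi_sq; rewrite expr2 => h; nra.
have key : forall k, s * (fib k)%:R = phi ^+ k - psi ^+ k.
  have psq : psi ^+ 2 = psi + 1.
    rewrite /psi; have := phi_sq; rewrite !expr2 => h; nra.
  have two : forall k, s * (fib k)%:R = phi ^+ k - psi ^+ k /\
                       s * (fib k.+1)%:R = phi ^+ k.+1 - psi ^+ k.+1.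
    elim => [|j [IH1 IH2]].
      by split; rewrite /= ?mulr0 ?subrr // mulr1 !expr1 /psi phiE; field.
    split => //.
    have -> : fib j.+2 = (fib j.+1 + fib j)%N by [].
    rewrite natrD mulrDr IH1 IH2 -[j.+2]addn2 -[j.+1]addn1 !exprD phi_sq psq expr1; ring.
  by move=> k'; case: (two k').
have hp : psi ^+ k = phi ^+ k * (- bq) ^+ k by rewrite -exprMn mulrC hb.
rewrite -[LHS](mulKf s0) key hp; field; exact: s0.
Qed.
End Golden.
Lemma weier (R : realFieldType) (a : nat -> R) n : (forall i, 0 <= a i <= 1) ->
  1 - \sum_(i < n) a i <= \prod_(i < n) (1 - a i) /\ 0 <= \prod_(i < n) (1 - a i) <= 1.
Proof.
move=> ha; elim: n => [|n [IH1 /andP[IH2 IH3]]]; first by rewrite !big_ord0 subr0 lexx ler01.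
rewrite !big_ord_recr /=; have /andP[a0 a1] := ha n.
set X := \prod_(i < n) _ in IH1 IH2 IH3 *; set Y := \sum_(i < n) _ in IH1 *.
split; first nra.
apply/andP; split; nra.
Qed.

Lemma geo (R : comRingType) (r : R) N j :
  (1 - r) * \sum_(i < j) r ^+ (i + N) = r ^+ N - r ^+ (j + N).
Proof.
elim: j => [|j IH]; first by rewrite big_ord0 mulr0 add0n subrr.
rewrite big_ord_recr /= mulrDr IH addSn exprS; ring.
Qed.

Lemma Pbounds (R : realFieldType) (q : R) n : 0 <= q <= 2/5 ->
  1/3 <= \prod_(i < n) (1 - (- q) ^+ i.+1) <= 3.
Proof.
move=> /andP[q0 q1].
have qk k : 0 <= q ^+ k <= 1 by rewrite exprn_ge0 // exprn_ile1 // (le_trans q1) //; lra.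
have bk k : - q ^+ k <= (- q) ^+ k <= q ^+ k.
  have := ler_norm ((- q) ^+ k); have := ler_norm (- ((- q) ^+ k)).
  rewrite normrN normrX normrN ger0_norm // => h1 h2; rewrite h2 andbT; lra.
have [hA /andP[A0 A1]] := @weier R (fun i => q ^+ i.+1) n (fun i => qk i.+1).
have hS : \sum_(i < n) q ^+ i.+1 <= 2/3.
  have := @geo _ q 1 n; rewrite (eq_bigr (fun i : 'I_n => q ^+ i.+1)); last by move=> i _; rewrite addn1.
  set S := \sum_(i < n) _; rewrite expr1 => h.
  have := qk (n + 1)%N; nra.
have AP : \prod_(i < n) (1 - q ^+ i.+1) <= \prod_(i < n) (1 - (- q) ^+ i.+1).
  apply: ler_prod => i _; have := bk i.+1; have := qk i.+1; lra.
have PB : \prod_(i < n) (1 - (- q) ^+ i.+1) <= \prod_(i < n) (1 + q ^+ i.+1).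
  apply: ler_prod => i _; have := bk i.+1; have := qk i.+1; lra.
have BA : \prod_(i < n) (1 + q ^+ i.+1) * \prod_(i < n) (1 - q ^+ i.+1) <= 1.
  rewrite -big_split /=; apply: prodr_ile1 => i _; have := qk i.+1; nra.
have B0 : 0 <= \prod_(i < n) (1 + q ^+ i.+1) by apply: prodr_ge0 => i _; have := qk i.+1; lra.
apply/andP; split; nra.
Qed.
Lemma fib_lb (R : realFieldType) n : (3/2) ^+ n <= (fib n.+2)%:R :> R.
Proof.
have two : forall j, (3/2) ^+ j <= (fib j.+2)%:R :> R /\ (3/2) ^+ j.+1 <= (fib j.+3)%:R :> R.
  elim => [|j [IH1 IH2]]; first by split; rewrite /= ?expr0 ?expr1; lra.
  split => //.
  have -> : fib j.+4 = (fib j.+3 + fib j.+2)%N by [].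
  have h' : 0 <= (3/2 :> R) by lra.
  have h := exprn_ge0 j h'.
  rewrite natrD; rewrite !exprS in IH1 IH2 *; nra.
by case: (two n).
Qed.

Lemma mob_norm (R : realDomainType) k : `|(mobius k)%:~R : R| <= 1.
Proof.
rewrite /mobius; case: ifP => _; last by rewrite normr0 ler01.
by rewrite rmorphXn rmorphN1 normrX normrN normr1 expr1n.
Qed.

Lemma term_bound (R : realFieldType) n :
  `|(mobius n.+1)%:~R / (fib n.+1)%:R : R| <= 3/2 * (2/3) ^+ n.
Proof.
rewrite normrM; have := mob_norm R n.+1.
have F0 : 0 < (fib n.+1)%:R :> R.
  by rewrite ltr0n; elim: n => // -[|k] IH //=; exact: ltn_addr.
rewrite normfV (ger0_norm (ltW F0)) => hm.
have : (fib n.+1)%:R^-1 <= 3/2 * (2/3) ^+ n :> R.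
  clear hm; case: n F0 => [|m] F0; first by rewrite /= invr1 expr0; lra.
  have h := fib_lb R m.
  have e : 3/2 * (2/3)^+m.+1 = ((3/2)^+m)^-1 :> R.
    rewrite exprS mulrA (_ : 3/2 * (2/3) = 1 :> R); last by field.
    by rewrite mul1r -exprVn invf_div.
  rewrite e lef_pV2 ?posrE // exprn_gt0 //; lra.
move=> H; have Fi : 0 <= (fib n.+1)%:R^-1 :> R by rewrite invr_ge0 ltW.
have := normr_ge0 ((mobius n.+1)%:~R : R); nra.
Qed.

Lemma S6 (R : realFieldType) : \sum_(i < 6) (mobius i.+1)%:~R / (fib i.+1)%:R = -23/40 :> R.
Proof.
have m1 : mobius 1 = 1 by []. have m2 : mobius 2 = -1 by [].
have m3 : mobius 3 = -1 by []. have m4 : mobius 4 = 0 by [].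
have m5 : mobius 5 = -1 by []. have m6 : mobius 6 = 1 by [].
rewrite !big_ord_recr big_ord0 /=.
rewrite m1 m2 m3 m4 m5 m6 !natrD !(rmorphN1, rmorph1, rmorph0).
by field.
Qed.

Lemma S_le (R : realFieldType) n : (6 <= n)%N ->
  \sum_(i < n) (mobius i.+1)%:~R / (fib i.+1)%:R <= -1/10 :> R.
Proof.
move=> /subnK <-; set j := (n - 6)%N; rewrite addnC big_split_ord /= S6.
have tail : \sum_(i < j) (mobius (6 + i).+1)%:~R / (fib (6 + i).+1)%:R
            <= 3/2 * \sum_(i < j) (2/3) ^+ (i + 6) :> R.
  rewrite mulr_sumr; apply: ler_sum => i _.
  apply: le_trans (ler_norm _) _; rewrite addnC; exact: term_bound.
have := @geo R (2/3) 6 j; have := exprn_ge0 (j + 6) (_ : 0 <= 2/3 :> R).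
set G := \sum_(i < j) _ in tail *.
move=> h0 h1; have h2 : 0 <= 2/3 :> R by lra.
have := h0 h2; move: h1; rewrite (_ : (2/3) ^+ 6 = 64/729 :> R); last first.
  by rewrite !exprS expr0; field.
move=> h1 h3; lra.
Qed.


Lemma sum_shift1 (T : Type) (idx : T) (op : Monoid.law idx) (f : nat -> T) n :
  \big[op/idx]_(1 <= k < n.+1) f k = \big[op/idx]_(i < n) f i.+1.
Proof. by rewrite big_add1 /= big_mkord. Qed.

Lemma tri n : (\sum_(i < n) i.+1)%N = (n * n.+1)./2.
Proof.
have := bin2_sum n.+1; rewrite big_nat_recl // big_mkord bin2 /= add0n mulnC => ->.
by [].
Qed.

Lemma ratio_alg (R : fieldType) (a x y P S : R) : x != 0 -> y != 0 ->
  a * x * y^-1 / (x / y * P * S) = a / (P * S).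
Proof.
move=> x0 y0; rewrite !invfM; set u := P^-1; set v := S^-1.
field; by rewrite x0 y0 oner_neq0.
Qed.

Theorem theorem3 (R : realType) :
  exists C : R,
    (fun n : nat => \sum_(1 <= k < n.+1) (mobius k)%:~R / (fib k)%:R) @ \oo --> C /\
  exists Cphi : R,
    (fun n : nat => \prod_(1 <= k < n.+1) (1 - (- (golden R)^-2) ^+ k)) @ \oo --> Cphi /\
    (fun n : nat =>
       (C * Cphi * golden R ^+ (n * n.+1)./2 * (Num.sqrt (5:R) ^+ n)^-1)
         / \det (fibRedheffer R n)) @ \oo --> (1 : R).
Proof.
set Sf := fun n : nat => \sum_(1 <= k < n.+1) (mobius k)%:~R / (fib k)%:R.
set Pf := fun n : nat => \prod_(1 <= k < n.+1) (1 - (- (golden R)^-2) ^+ k).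
have SfE n : Sf n = \sum_(i < n) (mobius i.+1)%:~R / (fib i.+1)%:R :> R.
  by rewrite /Sf sum_shift1.
have PfE n : Pf n = \prod_(i < n) (1 - (- bq R) ^+ i.+1).
  by rewrite /Pf sum_shift1.
have hq : 0 <= bq R <= 2/5 by rewrite bq_ge0 bq_le.
have SC : cvgn Sf.
  apply: (@cvg_geom_diff _ _ (3/2) (2/3)); [lra|lra|] => n.
  by rewrite !SfE big_ord_recr /= addrC addrK; exact: term_bound.
have PC : cvgn Pf.
  apply: (@cvg_geom_diff _ _ 3 (bq R)); [lra| |] => [|n].
    by move: hq => /andP[h1 h2]; rewrite h1 /=; lra.
  rewrite !PfE big_ord_recr /= mulrBr mulr1 addrAC subrr add0r normrN normrM.
  have /andP[p1 p2] := Pbounds _ _ n hq.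
  move: hq => /andP[h1 h2].
  rewrite (ger0_norm (_ : 0 <= _)); last lra.
  rewrite normrX normrN (ger0_norm h1).
  have e1 : bq R ^+ n.+1 <= bq R ^+ n.
    by rewrite exprS ler_piMl ?exprn_ge0 //; lra.
  have e2 := exprn_ge0 n.+1 h1.
  nra.
exists (limn Sf); split => //.
exists (limn Pf); split => //.
set C := limn Sf; set Cphi := limn Pf.
have Cle : C <= -1/10.
  apply: (cvgr_to_le SC); near=> n; rewrite SfE; apply: S_le; near: n.
  by exists 6%N.
have Cge : 1/3 <= Cphi.
  apply: (cvgr_to_ge PC); apply: nearW => n; rewrite PfE.
  by have /andP[] := Pbounds _ _ n hq.
have CN0 : C != 0 by apply/eqP => h; rewrite h in Cle; lra.
have CphiN0 : Cphi != 0 by apply/eqP => h; rewrite h in Cge; lra.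
have detE n : \det (fibRedheffer R n.+1) =
    golden R ^+ (n.+1 * n.+2)./2 / Num.sqrt 5 ^+ n.+1 * Pf n.+1 * Sf n.+1.
  rewrite (@det_fibR R n) SfE PfE; congr (_ * _).
  rewrite (eq_bigr (fun i : 'I_n.+1 => golden R ^+ i.+1 * (Num.sqrt 5)^-1 * (1 - (- bq R) ^+ i.+1))); last first.
    by move=> i _; rewrite binet.
  by rewrite big_split big_split /= prodrXr tri prodr_const card_ord exprVn.
have L : (fun n => C * Cphi / (Pf n * Sf n)) @ \oo --> (1 : R).
  have -> : (1 : R) = C * Cphi * (Cphi * C)^-1 by rewrite (mulrC Cphi) mulfV ?mulf_neq0.
  apply: cvgMr; apply: cvgV; first by rewrite mulf_neq0.
  by apply: cvgM.
apply: cvg_trans L; apply: near_eq_cvg; near=> n.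
have n0 : (0 < n)%N by near: n; exists 1%N.
have [m ->] : exists m, n = m.+1 by case: (n) n0 => // m _; exists m.
rewrite /=.
rewrite detE ratio_alg // expf_neq0 //; apply/eqP; have := phi_gt0 R; lra.
Unshelve. all: by end_near.
Qed.
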